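(* Let $\theta\in\Theta\subseteq\mathbb{R}$ and let the data $\mathbf X\in\mathbb{R}^n$ be generated by $\mathbf X=\mathbf G(\mathbf U,\theta)$, where $\mathbf U$ is a random variable whose distribution does not depend on $\theta$. Assume there is a one-to-one $C^1$ transformation $\mathbf X\mapsto(S(\mathbf X),\mathbf A(\mathbf X))$ with $S(\mathbf X)$ real-valued and $\mathbf A(\mathbf X)$ an $(n-1)$-dimensional vector of ancillary statistics, in the sense that $\mathbf A(\mathbf G(\mathbf U,\theta))$ does not depend on $\theta$. Set $G_S(\mathbf u,\theta)=S(\mathbf G(\mathbf u,\theta))$ and $\mathbf G_{\mathbf A}(\mathbf u)=\mathbf A(\mathbf G(\mathbf u,\theta))$, so that $s=G_S(\mathbf U,\theta)$, $\mathbf a=\mathbf G_{\mathbf A}(\mathbf U)$. Let $Q_s(\mathbf u)=\{\theta: s=G_S(\mathbf u,\theta)\}$, let $\mathbf U^\star_{\mathbf a}$ have the conditional distribution of $\mathbf U$ given $\mathbf G_{\mathbf A}(\mathbf U)=\mathbf a$, and let $F_{S\mid\mathbf a}(\cdot,\theta)$ be the conditional distribution function of $S(\mathbf X)$ given $\mathbf A(\mathbf X)=\mathbf a$. Suppose (1) for every $\mathbf u$, $\theta\mapsto G_S(\mathbf u,\theta)$ is non-decreasing, and (2) for every $\mathbf u$ and $s$, $Q_s(\mathbf u)\neq\emptyset$. Then $Q_s(\mathbf u)$ is an interval with endpoints $Q^-_s(\mathbf u)\le Q^+_s(\mathbf u)$, and for any $s_0,\theta_0$, $$P\big(Q^+_{s_0}(\mathbf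 U^\star_{\mathbf a})\le\theta_0\big)=1-\lim_{\epsilon\downarrow0}F_{S\mid\mathbf a}(s_0,\theta_0+\epsilon),\qquad P\big(Q^-_{s_0}(\mathbf U^\star_{\mathbf a})\le\theta_0\big)=1-\lim_{\epsilon\downarrow0}F_{S\mid\mathbf a}(s_0-\epsilon,\theta_0).$$ If moreover (3) for all $\theta_0,s_0$, $F_{S\mid\mathbf a}(s_0,\theta_0)-\lim_{\epsilon\downarrow0}F_{S\mid\mathbf a}(s_0-\epsilon,\theta_0)=0$, then $F_{S\mid\mathbf a}(s,\theta)$ is continuous in $\theta$, $Q^+_{s_0}(\mathbf U^\star_{\mathbf a})=Q^-_{s_0}(\mathbf U^\star_{\mathbf a})$ almost surely, and $P\big(Q_{s_0}(\mathbf U^\star_{\mathbf a})\le\theta_0\big)=1-F_{S\mid\mathbf a}(s_0,\theta_0)$.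
   Context: When $P(Q_s(\mathbf U)\neq\emptyset)=1$, the generalized fiducial distribution of $\theta$ given observed $(s,\mathbf a)$ is the distribution of $Q_s(\mathbf U^\star_{\mathbf a})$. *)

(* Defs.v *)
From HB Require Import structures.
From mathcomp Require Import all_boot all_order all_algebra.
From mathcomp Require Import all_classical all_reals all_analysis measurable_realfun.
Set Implicit Arguments. Unset Strict Implicit. Unset Printing Implicit Defensive.
Import Order.TTheory GRing.Theory Num.Theory.
Import numFieldNormedType.Exports.
Local Open Scope classical_set_scope.
Local Open Scope ring_scope.

Definition rVBorel (R : realType) (k : nat) :=
  g_sigma_algebraType (@open 'rV[R]_k).

Definition C1 (R : realType) (m : nat) (V : normedModType R)
  (f : 'rV[R]_m -> V) : Prop :=
  (forall x, differentiable f x) /\ (forall v : 'rV[R]_m, continuous ('D_v f)).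

(* k is (a version of) the regular conditional distribution of U given
   GA(U) = a, where U is the identity on the probability space (TU, P):
   a |-> k a B is measurable, and
   P(U in B, GA(U) in C) = \int_{a in C} k a B  d(law of GA(U))(a). *)
Definition is_cond_distr d (TU : measurableType d) (R : realType) (n : nat)
  (P : probability TU R) (GA : TU -> rVBorel R n)
  (k : rVBorel R n -> probability TU R) : Prop :=
  (forall B : set TU, measurable B ->
     measurable_fun [set: rVBorel R n] ((fun a => k a B) : rVBorel R n -> \bar R)) /\
  (forall (B : set TU) (C : set (rVBorel R n)), measurable B -> measurable C ->
     P (B `&` GA @^-1` C) = (\int[pushforward P GA]_(a in C) k a B)%E).

Definition Qset (R : realType) (TU : Type) (GS : TU -> R -> R) (s : R) (u : TU)
  : set R := [set theta | s = GS u theta].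
Definition Qminus (R : realType) (TU : Type) (GS : TU -> R -> R) (s : R) (u : TU)
  : R := inf (Qset GS s u).
Definition Qplus (R : realType) (TU : Type) (GS : TU -> R -> R) (s : R) (u : TU)
  : R := sup (Qset GS s u).

(* Conditional distribution function of S(X) given A(X) = a under theta,
   X = G(U, theta): F_{S|a}(s, theta) = P(G_S(U*_a, theta) <= s). *)
Definition Fcond d (TU : measurableType d) (R : realType) (n : nat)
  (k : rVBorel R n -> probability TU R) (GS : TU -> R -> R)
  (a : rVBorel R n) (s theta : R) : R :=
  fine (k a [set u | GS u theta <= s]).

Definition GSof (R : realType) (TU : Type) (n : nat)
  (S : 'rV[R]_n -> R) (G : TU -> R -> 'rV[R]_n) : TU -> R -> R :=
  fun u theta => S (G u theta).

(* Main.v *)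
Require Import Defs.
From HB Require Import structures.
From mathcomp Require Import all_boot all_order all_algebra.
From mathcomp Require Import all_classical all_reals all_analysis measurable_realfun.
From mathcomp Require Import lra ring.
Import Order.TTheory GRing.Theory Num.Theory.
Import numFieldNormedType.Exports.
Local Open Scope classical_set_scope.
Local Open Scope ring_scope.
Section Det.
Variables (R : realType) (f : R -> R).
Hypothesis hf : {homo f : x y / x <= y}.
Hypothesis hs : forall s, [set th | s = f th] !=set0.

Lemma mono_lt x y : f x < f y -> x < y.
Proof. by move=> h; case: ltP => // /hf; rewrite leNgt h. Qed.

Lemma Q_ub s : has_ubound [set th | s = f th].
Proof.
have [t1 /= E1] := hs (s + 1); exists t1 => q /= Eq.
rewrite leNgt; apply/negP => /ltW /hf; rewrite -E1 -Eq; lra.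
Qed.

Lemma Q_lb s : has_lbound [set th | s = f th].
Proof.
have [t1 /= E1] := hs (s - 1); exists t1 => q /= Eq.
rewrite leNgt; apply/negP => /ltW /hf; rewrite -E1 -Eq; lra.
Qed.

Lemma Q_part1 s :
  inf [set th | s = f th] <= sup [set th | s = f th] /\
  [set th | inf [set th | s = f th] < th < sup [set th | s = f th]] `<=` [set th | s = f th] /\
  [set th | s = f th] `<=` [set th | inf [set th | s = f th] <= th <= sup [set th | s = f th]].
Proof.
set Q := [set th | s = f th].
have Qn : Q !=set0 := hs s.
have lbQ := ge_inf (Q_lb s). have ubQ := ub_le_sup (Q_ub s).
split; [|split].
- by have [q Qq] := Qn; apply: le_trans (lbQ _ Qq) (ubQ _ Qq).
- move=> th /= /andP[h1 h2].
  have [q1 Qq1 hq1] := @inf_adherent R Q (th - inf Q) ltac:(by rewrite subr_gt0) (conj Qn (Q_lb s)).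
  have [q2 Qq2 hq2] := @sup_adherent R Q (sup Q - th) ltac:(by rewrite subr_gt0) (conj Qn (Q_ub s)).
  have a1 : f q1 <= f th by apply: hf; lra.
  have a2 : f th <= f q2 by apply: hf; lra.
  rewrite /Q /= in Qq1 Qq2; apply/eqP; rewrite eq_le; apply/andP; split; lra.
- by move=> th Qth /=; rewrite lbQ // ubQ.
Qed.

Lemma Q_plus_le s th :
  sup [set t | s = f t] <= th <-> (forall t, th < t -> s < f t).
Proof.
have [q Qq] := hs s.
split.
- move=> h t tht; rewrite lt_neqAle; apply/andP; split.
    apply/eqP => Est; have := ub_le_sup (Q_ub s) Est; lra.
  rewrite Qq; apply: hf; have := ub_le_sup (Q_ub s) Qq; lra.
- move=> h; apply: ge_sup; first by exists q.
  move=> t /= Et; rewrite leNgt; apply/negP => /h; rewrite -Et ltxx.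
  by [].
Qed.

Lemma Q_minus_le s th :
  inf [set t | s = f t] <= th <-> s <= f th.
Proof.
have [q Qq] := hs s.
split.
- move=> h; rewrite leNgt; apply/negP => fth.
  have [t /= Et] := hs ((f th + s) / 2).
  have tht : th < t by apply: mono_lt; rewrite -Et; lra.
  have lbt : lbound [set t | s = f t] t.
    move=> q' /= Eq'; apply/ltW/mono_lt; rewrite -Et -Eq'; lra.
  have := lb_le_inf (ex_intro _ q Qq) lbt; lra.
- rewrite le_eqVlt => /orP[/eqP Es|hlt].
    by apply: ge_inf; [exact: Q_lb|].
  apply: le_trans (ge_inf (Q_lb s) Qq) _.
  by apply/ltW/mono_lt; rewrite -Qq.
Qed.

Lemma left_cont s th : (forall t, t < th -> f t <= s) -> f th <= s.
Proof.
move=> h; rewrite leNgt; apply/negP => sf.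
have [t /= Et] := hs ((f th + s) / 2).
have : t < th by apply: mono_lt; rewrite -Et; lra.
move=> /h; rewrite -Et; lra.
Qed.

Lemma right_ex s th : f th < s -> exists2 t, th < t & f t <= s.
Proof.
move=> h; have [t /= Et] := hs ((f th + s) / 2).
exists t; first by apply: mono_lt; rewrite -Et; lra.
rewrite -Et; lra.
Qed.

End Det.
Arguments mono_lt {R f}. Arguments Q_ub {R f}. Arguments Q_lb {R f}.
Arguments Q_part1 {R f}. Arguments Q_plus_le {R f}. Arguments Q_minus_le {R f}.
Arguments left_cont {R f}. Arguments right_ex {R f}.
Definition rlim {R : realType} (g : R -> R) (l : R) :=
  forall eps, 0 < eps -> exists2 del, 0 < del &
    forall e, 0 < e -> e < del -> `|l - g e| < eps.

Lemma rlim_cvg (R : realType) (g : R -> R) l :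
  rlim g l -> g e @[e --> 0^'+] --> l.
Proof.
move=> rl; apply/cvgrPdist_lt => eps eps0.
have [del d0 Hd] := rl eps eps0.
near=> e; apply: Hd.
  by near: e; exact: nbhs_right_gt.
by near: e; exact: nbhs_right_lt.
Unshelve. all: by end_near.
Qed.

Lemma rlim_cont (R : realType) (g : R -> R) x :
  rlim (fun e => g (x + e)) (g x) -> rlim (fun e => g (x - e)) (g x) ->
  {for x, continuous g}.
Proof.
move=> r1 r2; apply/cvgrPdist_lt => eps eps0.
have [d1 d10 H1] := r1 eps eps0.
have [d2 d20 H2] := r2 eps eps0.
apply/nbhs_ballP; exists (Num.min d1 d2); first by rewrite /= lt_min d10 d20.
move=> t; rewrite /ball_ /= lt_min => /andP[t1 t2].
have [tx|xt|<-] := ltgtP t x.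
- have := H2 (x - t); rewrite subr_gt0 => /(_ tx).
  rewrite (_ : x - (x - t) = t); last by ring.
  apply; move: t2; rewrite ger0_norm // subr_ge0 ltW //.
- have := H1 (t - x); rewrite subr_gt0 => /(_ xt).
  rewrite (_ : x + (t - x) = t); last by ring.
  apply; move: t1; rewrite distrC ger0_norm // subr_ge0 ltW //.
- by rewrite subrr normr0.
Qed.

Section Meas.
Context d (T : measurableType d) (R : realType) (mu : probability T R).

Lemma fin_mu {A} : measurable A -> mu A \is a fin_num.
Proof. by move=> mA; apply: (@fin_num_measure _ _ _ mu A). Qed.

Lemma fine_setC A : measurable A -> fine (mu (~` A)) = 1 - fine (mu A).
Proof.
move=> mA; rewrite probability_setC // -(fineK (fin_mu mA)) -EFinB /=.
by [].
Qed.

Lemma fine_mu_le A B : measurable A -> measurable B -> A `<=` B ->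
  fine (mu A) <= fine (mu B).
Proof.
move=> mA mB AB; apply: fine_le; [exact: fin_mu|exact: fin_mu|].
exact: le_measure (mem_set mA) (mem_set mB) AB.
Qed.

Lemma incr_lim (E : R -> set T) (U : set T) :
  (forall e, 0 < e -> measurable (E e)) ->
  (forall e1 e2, 0 < e1 -> e1 <= e2 -> E e2 `<=` E e1) ->
  (forall u, U u <-> exists2 e, 0 < e & E e u) ->
  measurable U /\ rlim (fun e => fine (mu (E e))) (fine (mu U)).
Proof.
move=> mE monE HU.
pose F m := E (m.+1%:R^-1).
have mF m : measurable (F m) by apply: mE; rewrite invr_gt0.
have UF : U = \bigcup_m F m.
  apply/seteqP; split.
  - move=> u /HU [e e0 Eu].
    have [N _ HN] := near_infty_natSinv_lt (PosNum e0).
    exists N => //.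
    have NS : (0:R) < N.+1%:R^-1 by rewrite invr_gt0.
    exact: (monE N.+1%:R^-1 e NS (ltW (HN N (leqnn N))) u Eu).
  - move=> u [m _ Fu]; apply/HU; exists m.+1%:R^-1 => //.
have mU : measurable U by rewrite UF; exact: bigcupT_measurable.
split => //.
have ndF : nondecreasing_seq F.
  move=> m n mn.
  have NS : (0:R) < n.+1%:R^-1 by rewrite invr_gt0.
  have le : (n.+1%:R^-1 : R) <= m.+1%:R^-1.
    by rewrite lef_pV2 ?posrE // ler_nat ltnS.
  by rewrite subsetEset; exact: (monE _ _ NS le).
have cv : mu \o F @ \oo --> mu U.
  by rewrite UF; apply: nondecreasing_cvg_mu => //; rewrite -UF.
rewrite -(fineK (fin_mu mU)) in cv; move/fine_cvgP: cv => [_ cv].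
move=> eps eps0; move/cvgrPdist_lt: cv => /(_ eps eps0) [N _ HN].
exists N.+1%:R^-1; first by rewrite invr_gt0.
move=> e e0 eN.
have h := HN N (leqnn N); rewrite /= in h.
have a1 : fine (mu (F N)) <= fine (mu (E e)).
  by apply: fine_mu_le => //; [exact: mE | apply: monE => //; exact: ltW].
have a2 : fine (mu (E e)) <= fine (mu U).
  by apply: fine_mu_le => //; [exact: mE | move=> u Eu; apply/HU; exists e].
rewrite ger0_norm ?subr_ge0 // in h; last exact: le_trans a2.
rewrite ger0_norm ?subr_ge0 //; lra.
Qed.

Lemma decr_lim (E : R -> set T) (I : set T) :
  (forall e, 0 < e -> measurable (E e)) ->
  (forall e1 e2, 0 < e1 -> e1 <= e2 -> E e1 `<=` E e2) ->
  (forall u, I u <-> forall e, 0 < e -> E e u) ->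
  measurable I /\ rlim (fun e => fine (mu (E e))) (fine (mu I)).
Proof.
move=> mE monE HI.
have HU : forall u, (~` I) u <-> exists2 e, 0 < e & (~` E e) u.
  move=> u; split.
  - move=> nI; apply: contrapT => H; apply: nI; apply/HI => e e0.
    by apply: contrapT => nE; apply: H; exists e.
  - by case=> e e0 nE Iu; apply: nE; exact: (proj1 (HI u) Iu e e0).
have mE' : forall e, 0 < e -> measurable (~` E e).
  by move=> e e0; apply: measurableC; exact: mE.
have monE' : forall e1 e2, 0 < e1 -> e1 <= e2 -> (~` E e2) `<=` (~` E e1).
  by move=> e1 e2 e10 e12 u nE E1; apply: nE; exact: (monE _ _ e10 e12 u E1).
have [mU rl] := incr_lim (fun e => ~` E e) (~` I) mE' monE' HU.
have mI : measurable I by rewrite -[I]setCK; exact: measurableC.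
split => // eps eps0; have [del d0 Hd] := rl eps eps0.
exists del => // e e0 ed; have := Hd e e0 ed.
rewrite !fine_setC //; last exact: mE.
have E1 : forall a b : R, (1 - a) - (1 - b) = b - a.
  by move=> a b; rewrite opprB addrC addrA subrK.
by rewrite E1 distrC.
Qed.

End Meas.

Theorem corollary1 (R : realType) (n : nat)
  (d : measure_display) (TU : measurableType d) (P : probability TU R)
  (G : TU -> R -> 'rV[R]_n.+1)
  (S : 'rV[R]_n.+1 -> R) (A : 'rV[R]_n.+1 -> 'rV[R]_n)
  (GA : TU -> 'rV[R]_n)
  (k : rVBorel R n -> probability TU R)
  (hG : forall theta : R,
      measurable_fun [set: TU] ((fun u => G u theta) : TU -> rVBorel R n.+1))
  (hSA_bij : bijective (fun x : 'rV[R]_n.+1 => (S x, A x)))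
  (hS_C1 : C1 S) (hA_C1 : C1 A)
  (hanc : forall (u : TU) (theta : R), A (G u theta) = GA u)
  (hGA : measurable_fun [set: TU] (GA : TU -> rVBorel R n))
  (hk : is_cond_distr P GA k)
  (h1 : forall u : TU, {homo (GSof S G u) : x y / x <= y})
  (h2 : forall (u : TU) (s : R), Qset (GSof S G) s u !=set0) :
  (forall (s : R) (u : TU),
      Qminus (GSof S G) s u <= Qplus (GSof S G) s u /\
      [set th | Qminus (GSof S G) s u < th < Qplus (GSof S G) s u]
        `<=` Qset (GSof S G) s u /\
      Qset (GSof S G) s u
        `<=` [set th | Qminus (GSof S G) s u <= th <= Qplus (GSof S G) s u])
  /\
  (forall (a : rVBorel R n) (s0 th0 : R),
      Fcond k (GSof S G) a s0 (th0 + e) @[e --> 0^'+]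
        --> 1 - fine (k a [set u | Qplus (GSof S G) s0 u <= th0]) /\
      Fcond k (GSof S G) a (s0 - e) th0 @[e --> 0^'+]
        --> 1 - fine (k a [set u | Qminus (GSof S G) s0 u <= th0]))
  /\
  (forall a : rVBorel R n,
      (forall th0 s0 : R,
          Fcond k (GSof S G) a s0 th0
          - lim (Fcond k (GSof S G) a (s0 - e) th0 @[e --> 0^'+]) = 0) ->
      (forall s : R, continuous (fun th => Fcond k (GSof S G) a s th)) /\
      (forall s0 : R,
          {ae k a, forall u, Qplus (GSof S G) s0 u = Qminus (GSof S G) s0 u}) /\
      (forall s0 th0 : R,
          k a [set u | Qplus (GSof S G) s0 u <= th0]
            = (1 - Fcond k (GSof S G) a s0 th0)%:E /\
          k a [set u | Qminus (GSof S G) s0 u <= th0]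
            = (1 - Fcond k (GSof S G) a s0 th0)%:E)).
Proof.
set GS := GSof S G.
have mopen : forall th (O : set R), open O -> measurable [set u | O (GS u th)].
  move=> th O oO.
  have mO : measurable (S @^-1` O : set (rVBorel R n.+1)).
    apply: sub_sigma_algebra; apply: open_comp => // x _.
    exact: differentiable_continuous (hS_C1.1 x).
  by have := hG th measurableT _ mO; rewrite setTI.
have mle : forall th s, measurable [set u | GS u th <= s].
  move=> th s; have -> : [set u | GS u th <= s] = ~` [set u | s < GS u th].
    apply/seteqP; split => u /=; rewrite leNgt;
      [by move/negP | by move=> h; apply/negP].
  by apply: measurableC; exact: (mopen th [set x | s < x] (@open_gt R s)).
have mlt : forall th s, measurable [set u | GS u th < s].
  by move=> th s; exact: (mopen th [set x | x < s] (@open_lt R s)).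
have meq : forall th s, measurable [set u | GS u th = s].
  move=> th s.
  have -> : [set u | GS u th = s] = [set u | GS u th <= s] `\` [set u | GS u th < s].
    apply/seteqP; split => u /=.
    - by move=> ->; rewrite lexx ltxx.
    - by case => ha hb; apply/eqP; rewrite eq_le ha /= leNgt; apply/negP.
  exact: measurableD.
have P1 : forall s u,
      Qminus GS s u <= Qplus GS s u /\
      [set th | Qminus GS s u < th < Qplus GS s u] `<=` Qset GS s u /\
      Qset GS s u `<=` [set th | Qminus GS s u <= th <= Qplus GS s u].
  move=> s u; exact: (Q_part1 (h1 u) (h2 u) s).
have Up : forall a s th,
    measurable (~` [set u | Qplus GS s u <= th]) /\
    rlim (fun e => fine (k a [set u | GS u (th + e) <= s]))
         (fine (k a (~` [set u | Qplus GS s u <= th]))).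
  move=> a s th; apply: incr_lim.
  - by move=> e _; exact: mle.
  - by move=> e1 e2 _ le u /= h; apply: le_trans h; apply: h1; rewrite lerD2l.
  - move=> u; split.
    + move=> nQ; apply: contrapT => H; apply: nQ.
      apply/(Q_plus_le (h1 u) (h2 u)) => t tht; rewrite ltNge; apply/negP => ht.
      apply: H; exists (t - th); first by rewrite subr_gt0.
      by rewrite /= addrC subrK.
    + case=> e e0 /= he /(Q_plus_le (h1 u) (h2 u)) /(_ (th + e)).
      by rewrite ltrDl => /(_ e0); rewrite ltNge he.
have Um : forall a s th,
    measurable [set u | GS u th < s] /\
    rlim (fun e => fine (k a [set u | GS u th <= s - e]))
         (fine (k a [set u | GS u th < s])).
  move=> a s th; apply: incr_lim.
  - by move=> e _; exact: mle.
  - by move=> e1 e2 _ le u /= h; lra.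
  - move=> u; split.
    + by move=> /= h; exists (s - GS u th); [rewrite subr_gt0 | rewrite /=; lra].
    + by case=> e e0 /= h; lra.
have QmC : forall s th, ~` [set u | Qminus GS s u <= th] = [set u | GS u th < s].
  move=> s th; apply/seteqP; split => u /=.
  - move=> h; rewrite ltNge; apply/negP => h'; apply: h.
    exact/(Q_minus_le (h1 u) (h2 u)).
  - move=> h /(Q_minus_le (h1 u) (h2 u)) hle; move: hle.
    by rewrite leNgt h.
have mQm : forall s th, measurable [set u | Qminus GS s u <= th].
  by move=> s th; rewrite -[X in measurable X]setCK QmC; apply: measurableC.
have mQp : forall s th, measurable [set u | Qplus GS s u <= th].
  move=> s th; have [mU _] := Up (0 : 'rV[R]_n) s th.
  by rewrite -[X in measurable X]setCK; apply: measurableC.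
have P2 : forall (a : rVBorel R n) (s0 th0 : R),
      Fcond k GS a s0 (th0 + e) @[e --> 0^'+]
        --> 1 - fine (k a [set u | Qplus GS s0 u <= th0]) /\
      Fcond k GS a (s0 - e) th0 @[e --> 0^'+]
        --> 1 - fine (k a [set u | Qminus GS s0 u <= th0]).
  move=> a s0 th0; split.
  - have [_ rl] := Up a s0 th0.
    rewrite -fine_setC //; exact: rlim_cvg rl.
  - have [_ rl] := Um a s0 th0.
    rewrite -fine_setC // QmC; exact: rlim_cvg rl.
split; first exact: P1.
split; first exact: P2.
move=> a H.
have fin := fun A (mA : measurable A) => @fin_mu _ _ _ (k a) A mA.
have Hm : forall th s, fine (k a [set u | GS u th < s]) = Fcond k GS a s th.
  move=> th s.
  have L : lim (Fcond k GS a (s - e) th @[e --> 0^'+])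
           = 1 - fine (k a [set u | Qminus GS s u <= th]).
    by apply: cvg_lim => //; exact: (P2 a s th).2.
  have := H th s; rewrite L -fine_setC // QmC => /eqP; rewrite subr_eq0.
  by move=> /eqP ->.
have Hnull : forall th s, k a [set u | GS u th = s] = 0%E.
  move=> th s.
  have U : [set u | GS u th <= s] = [set u | GS u th < s] `|` [set u | GS u th = s].
    apply/seteqP; split => u /=.
    - by rewrite le_eqVlt => /orP[/eqP ->|->]; [right|left].
    - by case => [/ltW|->].
  have HD : [set u | GS u th < s] `&` [set u | GS u th = s] = set0.
    apply/seteqP; split => u //=; by case=> h E; move: h; rewrite E ltxx.
  have := measureU (k a) (mlt th s) (meq th s) HD; rewrite -U.
  move=> /(congr1 fine); rewrite fineD; last 2 first.
  - exact: fin _ (mlt th s).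
  - exact: fin _ (meq th s).
  move=> eq.
  have h0 : fine (k a [set u | GS u th = s]) = 0.
    by have := Hm th s; rewrite /Fcond; lra.
  have f3 := fin _ (meq th s).
  by rewrite -[LHS]fineK // h0.
have Hplus : forall s th,
    fine (k a (~` [set u | Qplus GS s u <= th])) = Fcond k GS a s th.
  move=> s th; have [mU _] := Up a s th.
  apply/le_anti/andP; split.
  - apply: (@fine_mu_le _ _ _ (k a) _ _ mU (mle th s)).
    move=> u /= nQ; rewrite leNgt; apply/negP => h; apply: nQ.
    apply/(Q_plus_le (h1 u) (h2 u)) => t tht.
    exact: lt_le_trans h (h1 u _ _ (ltW tht)).
  - rewrite -Hm; apply: (@fine_mu_le _ _ _ (k a) _ _ (mlt th s) mU).
    move=> u /= h Qp.
    have [t tht ht] := right_ex (h1 u) (h2 u) _ _ h.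
    move/(Q_plus_le (h1 u) (h2 u)): Qp => /(_ t tht).
    by rewrite ltNge ht.
split.
  move=> s x; apply: rlim_cont.
  - have [_ rl] := Up a s x; rewrite Hplus in rl; exact: rl.
  - have mE : forall e, 0 < e -> measurable [set u | GS u (x - e) <= s].
      by move=> e _; exact: mle.
    have monE : forall e1 e2, 0 < e1 -> e1 <= e2 ->
        [set u | GS u (x - e1) <= s] `<=` [set u | GS u (x - e2) <= s].
      move=> e1 e2 _ le u /= h; apply: le_trans h; apply: h1; lra.
    have HI : forall u, [set u | GS u x <= s] u <->
        (forall e, 0 < e -> [set u | GS u (x - e) <= s] u).
      move=> u; split.
      * move=> /= h e e0; apply: le_trans h; apply: h1; lra.
      * move=> /= h; apply: (left_cont (h1 u) (h2 u)) => t tx.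
        have := h (x - t); rewrite subr_gt0 => /(_ tx).
        by rewrite (_ : x - (x - t) = t) // opprB addrC subrK.
    have [_ rl] := @decr_lim _ _ _ (k a) _ _ mE monE HI.
    exact: rl.
split.
  move=> s0.
  apply: (@filterS _ _ _ (fun u => forall m q, unpickle m = Some q ->
                           GS u (ratr q) != s0)).
    move=> u Hu; have [p1 [p2 p3]] := P1 s0 u.
    have [lt|ge] := ltP (Qminus GS s0 u) (Qplus GS s0 u); last first.
      by apply/eqP; rewrite eq_le ge p1.
    have [q] := rat_in_itvoo lt; rewrite in_itv /= => /andP[q1 q2].
    have := p2 (ratr q); rewrite /= q1 q2 => /(_ isT) Eq.
    by have := Hu (pickle q) q (pickleK q); rewrite /Qset /= -Eq eqxx.
  apply: ae_foralln => m.
  case E: (unpickle m) => [q|].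
  - exists [set u | GS u (ratr q) = s0]; split => //.
    + exact: Hnull.
    + move=> u /= nP; apply: contrapT => ne; apply: nP => q' [<-].
      by apply/eqP.
  - exists set0; split; [exact: measurable0 | exact: measure0 |].
    by move=> u /= nP; apply: nP.
move=> s0 th0; split.
- have [mU _] := Up a s0 th0.
  have mQ := mQp s0 th0.
  rewrite -(fineK (fin _ mQ)); congr (_%:E).
  by rewrite -Hplus fine_setC // opprB addrC subrK.
- rewrite -(fineK (fin _ (mQm s0 th0))); congr (_%:E).
  by rewrite -Hm -QmC fine_setC // opprB addrC subrK.
Qed.
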